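(* Let $f:\mathbb{R}^n\to\mathbb{R}$ be differentiable and pseudo-convex, with $\nabla f$ $L$-Lipschitz continuous, and assume the stationary set $X^*$ is non-empty. Then the sequence $\{x^k\}$ generated by Algorithm 2 (run without stopping, with $\nabla f(x^k)\ne0$ for all $k$) converges to a point of $X^*$.
   Context: Pseudo-convex: $\nabla f$ pseudo-monotone, i.e. $\langle \nabla f(x),y-x\rangle\ge0\Rightarrow\langle\nabla f(y),y-x\rangle\ge0$ for all $x,y$. $X^*=\{x:\nabla f(x)=0\}$. Algorithm 2: parameters $0<\mu<\nu<1$, $0<\underline{h}<1\le\gamma_0^0\le\overline{h}$, $\theta\in(0,1)$, $\tau>1$, $\beta\in\left(\frac{1-\sqrt{1-\nu^2}}{\nu^2},1\right]$, starting point $x^0$. At iteration $k$: for $\gamma>0$ let $z^k(\gamma)=x^k-\gamma\nabla f(x^k)$ and $r_k(\gamma)=\gamma\|\nabla f(z^k(\gamma))-\nabla f(x^k)\|/\|z^k(\gamma)-x^k\|$; starting from $\gamma_0^k$, while $r_k(\gamma_l^k)>\nu$ set $\gamma_{l+1}^k=\gamma_l^k\theta\min\{1,1/r_k(\gamma_l^k)\}$; let $h_k$ be the first $\gamma_l^k$ with $r_k(\gamma_l^k)\le\nu$. Then $z^k=x^k-h_k\nabla f(x^k)$, $x^{k+1}=x^k-h_k\big(\nabla f(x^k)-\beta(\nabla f(x^k)-\nabla f(z^k))\big)$, and $\gamma_0^{k+1}=\mathbf{P}_{[\underline{h},\overline{h}]}(\tau h_k)$ if $r_k(h_k)\le\mu$,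 else $\gamma_0^{k+1}=\mathbf{P}_{[\underline{h},\overline{h}]}(h_k)$, where $\mathbf{P}_{[a,b]}$ is projection onto $[a,b]$. *)

(* Defs.v *)
From HB Require Import structures.
From mathcomp Require Import all_boot all_order all_algebra.
From mathcomp Require Import all_classical all_reals all_analysis.
Set Implicit Arguments. Unset Strict Implicit. Unset Printing Implicit Defensive.
Import Order.TTheory GRing.Theory Num.Theory.
Import numFieldNormedType.Exports.
Local Open Scope ring_scope.

Section Defs.
Variables (R : realType) (n : nat).

Definition dotp (u v : 'rV[R]_n) : R := \sum_(i < n) u ord0 i * v ord0 i.
Definition enorm (v : 'rV[R]_n) : R := Num.sqrt (dotp v v).

Definition proj_itv (a b t : R) : R := Num.max a (Num.min b t).

Variable g : 'rV[R]_n -> 'rV[R]_n. (* the gradient map *)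

Definition zpt (x : 'rV[R]_n) (gam : R) : 'rV[R]_n := x - gam *: g x.

Definition rk (x : 'rV[R]_n) (gam : R) : R :=
  gam * enorm (g (zpt x gam) - g x) / enorm (zpt x gam - x).

Fixpoint trial (theta : R) (x : 'rV[R]_n) (gam0 : R) (l : nat) : R :=
  match l with
  | 0 => gam0
  | l'.+1 => let c := trial theta x gam0 l' in
             c * theta * Num.min 1 (1 / rk x c)
  end.

(** One iteration of Algorithm 2: from (x^k, gamma_0^k) to (x^{k+1}, gamma_0^{k+1}).
    h_k is the first trial step with r_k <= nu. *)
Definition alg2_step (mu nu hlo hup theta tau beta : R)
    (xk : 'rV[R]_n) (g0k : R) (xk1 : 'rV[R]_n) (g0k1 : R) : Prop :=
  exists l : nat,
    let hk := trial theta xk g0k l in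
    [/\ rk xk hk <= nu,
        (forall j, (j < l)%N -> nu < rk xk (trial theta xk g0k j)),
        xk1 = xk - hk *: (g xk - beta *: (g xk - g (zpt xk hk))) &
        g0k1 = if rk xk hk <= mu then proj_itv hlo hup (tau * hk)
               else proj_itv hlo hup hk].

End Defs.

(* Main.v *)
Require Import Defs.
From HB Require Import structures.
From mathcomp Require Import all_boot all_order all_algebra.
From mathcomp Require Import all_classical all_reals all_analysis.
From mathcomp Require Import lra ring.
Import Order.TTheory GRing.Theory Num.Theory.
Import numFieldNormedType.Exports.
Local Open Scope classical_set_scope.
Local Open Scope ring_scope.
Module Helpers.
Set Implicit Arguments. Unset Strict Implicit.

Section Dot.
Variables (R : realType) (n : nat).
Implicit Types u v w : 'rV[R]_n.

Lemma dotpC u v : dotp u v = dotp v u.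
Proof. by rewrite /dotp; apply: eq_bigr => i _; rewrite mulrC. Qed.
Lemma dotpDl u v w : dotp (u + v) w = dotp u w + dotp v w.
Proof. by rewrite /dotp -big_split; apply: eq_bigr => i _; rewrite mxE mulrDl. Qed.
Lemma dotpZl a u v : dotp (a *: u) v = a * dotp u v.
Proof. by rewrite /dotp mulr_sumr; apply: eq_bigr => i _; rewrite mxE mulrA. Qed.
Lemma dotpNl u v : dotp (- u) v = - dotp u v.
Proof. by rewrite -scaleN1r dotpZl mulN1r. Qed.
Lemma dotpBl u v w : dotp (u - v) w = dotp u w - dotp v w.
Proof. by rewrite dotpDl dotpNl. Qed.
Lemma dotpDr u v w : dotp w (u + v) = dotp w u + dotp w v.
Proof. by rewrite dotpC dotpDl !(dotpC w). Qed.
Lemma dotpZr a u v : dotp v (a *: u) = a * dotp v u.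
Proof. by rewrite dotpC dotpZl dotpC. Qed.
Lemma dotpNr u v : dotp v (- u) = - dotp v u.
Proof. by rewrite dotpC dotpNl dotpC. Qed.
Lemma dotpBr u v w : dotp w (u - v) = dotp w u - dotp w v.
Proof. by rewrite dotpDr dotpNr. Qed.
Lemma dotp0l v : dotp 0 v = 0.
Proof. by rewrite -(scale0r 0) dotpZl mul0r. Qed.
Lemma dotp_ge0 v : 0 <= dotp v v.
Proof. by apply: sumr_ge0 => i _; rewrite -expr2 sqr_ge0. Qed.
Lemma dotp_eq0 v : dotp v v = 0 -> v = 0.
Proof.
move=> /eqP; rewrite psumr_eq0 => [/allP H|i _]; last by rewrite -expr2 sqr_ge0.
apply/rowP => i; rewrite mxE; apply/eqP.
by have := H i (mem_index_enum i); rewrite mulf_eq0 orbb.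
Qed.
Lemma coord_le v i : v ord0 i ^+ 2 <= dotp v v.
Proof.
rewrite /dotp (bigD1 i) //= -expr2 lerDl; apply: sumr_ge0 => j _.
by rewrite -expr2 sqr_ge0.
Qed.
Lemma dotp_le_coord v e : (forall i, v ord0 i ^+ 2 <= e) -> dotp v v <= n%:R * e.
Proof.
move=> H; rewrite /dotp.
have -> : n%:R * e = \sum_(i < n) e by rewrite sumr_const card_ord mulr_natl.
by apply: ler_sum => i _; rewrite -expr2; exact: H.
Qed.
Lemma enorm_sq v : enorm v ^+ 2 = dotp v v.
Proof. by rewrite /enorm sqr_sqrtr // dotp_ge0. Qed.
Lemma enorm_ge0 v : 0 <= enorm v.
Proof. exact: sqrtr_ge0. Qed.
Lemma sqD u v : dotp (u + v) (u + v) <= 2 * dotp u u + 2 * dotp v v.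
Proof.
have := dotp_ge0 (u - v).
rewrite !(dotpDl, dotpDr, dotpNl, dotpNr) (dotpC v u); lra.
Qed.
End Dot.


Lemma fejer_alg (R : realType) n (P d e : 'rV[R]_n) (b nu : R) :
  0 < b -> b <= 1 -> 0 <= dotp P d -> 0 <= dotp (d - e) (P - d) ->
  dotp e e <= nu ^+ 2 * dotp d d ->
  dotp (P - d + b *: e) (P - d + b *: e) <=
    dotp P P - (2 * b - 1 - b ^+ 2 * nu ^+ 2) * dotp d d.
Proof.
move=> b0 b1 H1 H2 H3.
rewrite !(dotpDl, dotpDr, dotpNl, dotpNr, dotpZl, dotpZr) in H2 *.
rewrite (dotpC d P) (dotpC e P) (dotpC e d) in H2 *.
set pp := dotp P P in H2 *; set pd := dotp P d in H1 H2 *.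
set pe := dotp P e in H2 *; set dd := dotp d d in H2 H3 *.
set de := dotp d e in H2 *; set ee := dotp e e in H3 *.
have h1 : 0 <= (1 - b) * pd by apply: mulr_ge0 => //; lra.
have h2 : 0 <= b * (pd - dd - pe + de) by apply: mulr_ge0; lra.
have h3 : 0 <= b ^+ 2 * (nu ^+ 2 * dd - ee) by apply: mulr_ge0; [exact: sqr_ge0| lra].
nra.
Qed.


Section Alg.
Variables (R : realType) (n : nat) (g : 'rV[R]_n -> 'rV[R]_n) (L : R).
Hypothesis HL : forall p q, enorm (g p - g q) <= L * enorm (p - q).
Let Lp := Num.max L 1.

Lemma Lp_gt0 : 0 < Lp.
Proof. by rewrite lt_max ltr01 orbT. Qed.

Lemma enorm_zpt_gt0 x gam : 0 < gam -> g x != 0 -> 0 < enorm (zpt g x gam - x).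
Proof.
move=> g0 gx; rewrite lt_neqAle enorm_ge0 andbT; apply/eqP => /esym H.
have : dotp (zpt g x gam - x) (zpt g x gam - x) = 0 by rewrite -enorm_sq H expr0n.
move/dotp_eq0; rewrite /zpt addrAC subrr add0r => /eqP.
by rewrite oppr_eq0 scaler_eq0 (negbTE gx) orbF gt_eqF.
Qed.

Lemma rk_le x gam : 0 < gam -> g x != 0 -> rk g x gam <= gam * Lp.
Proof.
move=> g0 gx; have B0 := enorm_zpt_gt0 g0 gx.
rewrite /rk ler_pdivrMr // -mulrA ler_pM2l //.
apply: le_trans (HL _ _) _; apply: ler_wpM2r; first exact: enorm_ge0.
by rewrite le_max lexx.
Qed.

Variables (nu theta hlo : R).
Hypotheses (nu0 : 0 < nu) (nu1 : nu < 1) (th0 : 0 < theta) (th1 : theta < 1)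
  (hlo0 : 0 < hlo).
Definition hmin := Num.min hlo (theta * nu / Lp).

Lemma hmin_gt0 : 0 < hmin.
Proof. by rewrite lt_min hlo0 /= divr_gt0 ?mulr_gt0 // Lp_gt0. Qed.

Lemma trial_lb x g0 l : g x != 0 -> hlo <= g0 ->
  (forall j, (j < l)%N -> nu < rk g x (trial g theta x g0 j)) ->
  forall j, (j <= l)%N -> hmin <= trial g theta x g0 j.
Proof.
move=> gx hg0 Hj; elim=> [_|j IH jl]; first by rewrite /= ge_min hg0.
have tj := IH (ltnW jl); have t0 : 0 < trial g theta x g0 j.
  exact: lt_le_trans hmin_gt0 tj.
have rj := Hj j jl; have rle := rk_le t0 gx.
set t := trial g theta x g0 j in t0 tj rj rle *.
set r := rk g x t in rj rle *.
have r0 : 0 < r by exact: lt_trans nu0 rj.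
have Lp0 := Lp_gt0.
rewrite /= -/t -/r ge_min; apply/orP; right.
have tnu : nu / Lp <= t by rewrite ler_pdivrMr //; apply: le_trans (ltW rj) rle.
have trL : 1 / Lp <= t / r by rewrite ler_pdivrMr // mulrAC ler_pdivlMr // mul1r.
have nL : nu / Lp <= 1 / Lp by rewrite ler_pM2r ?invr_gt0 //; exact: ltW.
have -> : theta * nu / Lp = theta * (nu / Lp) by rewrite mulrA.
set m := Num.min _ _.
have [h|h] := lerP 1 (1 / r); [have -> : m = 1 by exact: (min_l h) | have -> : m = 1 / r by exact: (min_r (ltW h))].
  rewrite mulr1; set a := nu / Lp in tnu nL *; rewrite (mulrC t). apply: ler_wpM2l. exact: ltW th0. exact: tnu.
have -> : t * theta * (1 / r) = theta * (t / r) by rewrite mul1r; ring.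
rewrite mul1r in trL nL; set a := nu / Lp in tnu nL *; set q := t / r in trL *.
apply: ler_wpM2l; [exact: ltW th0 | exact: le_trans nL trL].
Qed.

Variables (mu hup tau beta : R).
Hypotheses (bet0 : 0 < beta) (bet1 : beta <= 1).
Hypothesis Hpm : forall p q, 0 <= dotp (g p) (q - p) -> 0 <= dotp (g q) (q - p).

Lemma dotp_sqN (u v : 'rV[R]_n) : dotp (u - v) (u - v) = dotp (v - u) (v - u).
Proof. by rewrite !(dotpDl, dotpDr, dotpNl, dotpNr) (dotpC u v); lra. Qed.


Lemma step_fejer xs xk g0k xk1 g0k1 : g xs = 0 -> g xk != 0 -> hlo <= g0k ->
  alg2_step g mu nu hlo hup theta tau beta xk g0k xk1 g0k1 ->
  exists h, hmin <= h /\ dotp (xk1 - xs) (xk1 - xs) <= dotp (xk - xs) (xk - xs)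
     - (2 * beta - 1 - beta ^+ 2 * nu ^+ 2) * dotp (h *: g xk) (h *: g xk).
Proof.
move=> gxs gx hg0 [l [Hr Hj Hx1 _]].
set h := trial g theta xk g0k l in Hr Hx1 *.
have hlb : hmin <= h by exact: (trial_lb gx hg0 Hj (leqnn l)).
have h0 : 0 < h by exact: lt_le_trans hmin_gt0 hlb.
exists h; split => //.
set z := zpt g xk h.
set d := h *: g xk; set e := h *: (g xk - g z).
have -> : xk1 - xs = (xk - xs) - d + beta *: e.
  by rewrite Hx1; apply/rowP => i; rewrite !mxE; ring.
apply: fejer_alg => //.
- have := @Hpm xs xk; rewrite gxs dotp0l lexx => /(_ isT) H.
  by rewrite dotpC /d dotpZl mulr_ge0 // ltW.
- have := @Hpm xs z; rewrite gxs dotp0l lexx => /(_ isT) H.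
  have -> : d - e = h *: g z by apply/rowP => i; rewrite !mxE; ring.
  have -> : xk - xs - d = z - xs by apply/rowP => i; rewrite !mxE; ring.
  by rewrite dotpZl mulr_ge0 // ltW.
- have B0 := enorm_zpt_gt0 h0 gx.
  move: Hr; rewrite /rk -/z ler_pdivrMr // => Hr.
  have A0 : 0 <= h * enorm (g z - g xk) by rewrite mulr_ge0 ?enorm_ge0 // ltW.
  have := ler_pM A0 A0 Hr Hr.
  rewrite -!expr2 !exprMn !enorm_sq => H.
  have Ez : z - xk = (- h) *: g xk by apply/rowP => i; rewrite !mxE; ring.
  rewrite Ez in H.
  rewrite /e /d !(dotpZl, dotpZr) dotp_sqN.
  rewrite !(dotpZl, dotpZr) in H.
  lra.
Qed.
End Alg.


Lemma coord_norm (R : realType) n (v : 'rV[R]_n) i : `|v ord0 i| <= `|v|.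
Proof. by rewrite [leRHS]/Num.norm /= mx_normrE; apply/bigmax_geP; right; exists (ord0, i). Qed.

Lemma norm_lt (R : realType) n (v : 'rV[R]_n) e :
  0 < e -> (forall i, `|v ord0 i| < e) -> `|v| < e.
Proof.
move=> e0 H; rewrite /Num.norm /= mx_normrE; apply: bigmax_lt => // -[a b] _ /=.
by rewrite (ord1 a); exact: H.
Qed.

Lemma ballE (R : realType) n (p y : 'rV[R]_n) e : ball p e y = (`|p - y| < e).
Proof. by rewrite -ball_normE. Qed.

Lemma g0_next (R : realType) n (g : 'rV[R]_n -> 'rV[R]_n) mu nu hlo hup theta tau beta
  xk g0k xk1 g0k1 :
  alg2_step g mu nu hlo hup theta tau beta xk g0k xk1 g0k1 -> hlo <= g0k1.
Proof.
by move=> [l [_ _ _ ->]]; case: ifP => _; rewrite /proj_itv le_max lexx.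
Qed.

Lemma cc_pos (R : realType) (nu beta : R) : 0 < nu -> nu < 1 ->
  (1 - Num.sqrt (1 - nu ^+ 2)) / nu ^+ 2 < beta -> beta <= 1 ->
  0 < 2 * beta - 1 - beta ^+ 2 * nu ^+ 2.
Proof.
move=> nu0 nu1 hb b1.
have n20 : 0 < nu ^+ 2 by rewrite exprn_gt0.
move: hb; rewrite ltr_pdivrMr // => hb.
set s := Num.sqrt _ in hb.
have s0 : 0 <= s by exact: sqrtr_ge0.
have ss : s ^+ 2 = 1 - nu ^+ 2 by rewrite sqr_sqrtr // subr_ge0; apply: exprn_ile1; lra.
have n21 : nu ^+ 2 < 1 by rewrite expr2; nra.
have f1 : 0 < beta * nu ^+ 2 - 1 + s by lra.
have f2 : beta * nu ^+ 2 - 1 - s < 0.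
  have : beta * nu ^+ 2 <= nu ^+ 2 by rewrite ler_piMl // ltW // (lt_trans _ hb) //; nra.
  lra.
have P : 0 < (-(beta * nu ^+ 2 - 1 - s)) * (beta * nu ^+ 2 - 1 + s).
  by apply: mulr_gt0; lra.
have key : 0 < nu ^+ 2 * (2 * beta - 1 - beta ^+ 2 * nu ^+ 2).
  have E : (-(beta * nu ^+ 2 - 1 - s)) * (beta * nu ^+ 2 - 1 + s) =
    nu ^+ 2 * (2 * beta - 1 - beta ^+ 2 * nu ^+ 2) + (s ^+ 2 - (1 - nu ^+ 2)) by ring.
  by rewrite E ss subrr addr0 in P.
by rewrite pmulr_rgt0 in key.
Qed.

End Helpers.
Import Helpers.

Theorem theorem3 (R : realType) (n : nat)
  (f : 'rV[R]_n -> R) (g : 'rV[R]_n -> 'rV[R]_n) (L : R)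
  (mu nu hlo hup theta tau beta : R)
  (x : nat -> 'rV[R]_n) (gam0 : nat -> R) :
  (forall p, differentiable f p /\ forall v, 'd f p v = dotp (g p) v) ->
  (forall p q, enorm (g p - g q) <= L * enorm (p - q)) ->
  (forall p q, 0 <= dotp (g p) (q - p) -> 0 <= dotp (g q) (q - p)) ->
  (exists p, g p = 0) ->
  0 < mu -> mu < nu -> nu < 1 ->
  0 < hlo -> hlo < 1 -> 1 <= gam0 0%N -> gam0 0%N <= hup ->
  0 < theta -> theta < 1 -> 1 < tau ->
  (1 - Num.sqrt (1 - nu ^+ 2)) / nu ^+ 2 < beta -> beta <= 1 ->
  (forall k, alg2_step g mu nu hlo hup theta tau beta
               (x k) (gam0 k) (x k.+1) (gam0 k.+1)) ->
  (forall k, g (x k) != 0) ->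
  exists xs, g xs = 0 /\ x @ \oo --> xs.
Proof.
move=> _ HL Hpm [xs0 gxs0] mu0 munu nu1 hlo0 hlo1 g00 _ th0 th1 _ hb b1 Hstep Hg.
have nu0 : 0 < nu by exact: lt_trans mu0 munu.
set cc := 2 * beta - 1 - beta ^+ 2 * nu ^+ 2.
have cc0 : 0 < cc by exact: cc_pos.
have bet0 : 0 < beta.
  have : 0 <= beta ^+ 2 * nu ^+ 2 by rewrite mulr_ge0 // sqr_ge0.
  rewrite /cc in cc0; lra.
set hm := hmin L nu theta hlo.
have hm0 : 0 < hm by exact: hmin_gt0.
set Lp := Num.max L 1.
have Lp0 : 0 < Lp by rewrite lt_max ltr01 orbT.
have gam_lb : forall k, hlo <= gam0 k.
  by case=> [|k]; [lra | exact: g0_next (Hstep k)].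
set D := fun xs k => dotp (x k - xs) (x k - xs).
have F : forall xs, g xs = 0 -> forall k,
    D xs k.+1 + cc * hm ^+ 2 * dotp (g (x k)) (g (x k)) <= D xs k.
  move=> xs gxs k.
  have [h [hh Hh]] := step_fejer HL nu0 nu1 th0 hlo0 bet0 b1 Hpm gxs (Hg k)
    (gam_lb k) (Hstep k).
  rewrite dotpZl dotpZr -/cc in Hh.
  have S0 := dotp_ge0 (g (x k)).
  have e1 : hm ^+ 2 <= h ^+ 2 by rewrite !expr2; apply: ler_pM => //; exact: ltW.
  have e2 : cc * (hm ^+ 2 * dotp (g (x k)) (g (x k))) <=
            cc * (h ^+ 2 * dotp (g (x k)) (g (x k))).
    by apply: ler_wpM2l; [exact: ltW | exact: ler_wpM2r].
  rewrite /D; rewrite -mulrA; lra.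
have Dmono : forall xs, g xs = 0 -> forall k m, (k <= m)%N -> D xs m <= D xs k.
  move=> xs gxs k m /subnK <-; elim: (m - k)%N => [|d IH]; first by rewrite add0n.
  apply: le_trans IH; rewrite addSn; have := F xs gxs (d + k)%N.
  have : 0 <= cc * hm ^+ 2 * dotp (g (x (d + k)%N)) (g (x (d + k)%N)).
    by rewrite !mulr_ge0 ?dotp_ge0 ?sqr_ge0 // ltW.
  lra.
have Dge0 : forall xs k, 0 <= D xs k by move=> xs k; exact: dotp_ge0.
have gsmall : forall eta, 0 < eta -> exists N, forall k, (N <= k)%N ->
    dotp (g (x k)) (g (x k)) < eta.
  move=> eta eta0.
  pose u := D xs0.
  have un : {homo u : a b / (a <= b)%N >-> (b <= a)%R}.
    by move=> a b ab; exact: Dmono.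
  have ulb : has_lbound (range u) by exists 0 => _ [k _ <-]; exact: Dge0.
  have ucv := nonincreasing_is_cvgn un ulb.
  have uge := nonincreasing_cvgn_ge un ucv.
  have c0 : 0 < cc * hm ^+ 2 * eta by rewrite !mulr_gt0 // exprn_gt0.
  have ucv2 : u @ \oo --> limn u := ucv.
  have [N _ HN] := cvgr_dist_lt _ _ ucv2 _ c0.
  exists N => k Nk; have := HN k Nk; rewrite /= distrC ger0_norm ?subr_ge0 //.
  have := F xs0 gxs0 k; have := uge k.+1; rewrite /u => h1 h2 h3.
  have h4 : cc * hm ^+ 2 * dotp (g (x k)) (g (x k)) < cc * hm ^+ 2 * eta by lra.
  by rewrite ltr_pM2l ?mulr_gt0 ?exprn_gt0 in h4.
set M := Num.sqrt (D xs0 0%N).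
pose A := fun i : 'I_n => `[xs0 ord0 i - M, xs0 ord0 i + M]%classic.
have cS : compact [set v : 'rV[R]_n | forall i, A i (v ord0 i)].
  by apply: rV_compact => i; exact: segment_compact.
have xS : forall k, [set v : 'rV[R]_n | forall i, A i (v ord0 i)] (x k).
  move=> k i; rewrite /A /= in_itv /= -ler_distl.
  rewrite -sqrtr_sqr /M ler_sqrt ?Dge0 //.
  apply: le_trans (Dmono xs0 gxs0 0%N k (leq0n k)).
  by have := coord_le (x k - xs0) i; rewrite !mxE.
have HS : (x @ \oo) [set v : 'rV[R]_n | forall i, A i (v ord0 i)].
  by exists 0%N => // k _; exact: xS.
have [p [_ clp]] := cS (x @ \oo) _ HS.
have clus : forall eta, 0 < eta -> forall N, exists k, (N <= k)%N /\ D p k < eta.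
  move=> eta eta0 N.
  set del := Num.min 1 (eta / (n.+1)%:R).
  have n10 : 0 < (n.+1)%:R :> R by rewrite ltr0n.
  have del0 : 0 < del by rewrite lt_min ltr01 /= divr_gt0.
  have HA : (x @ \oo) [set y | exists2 k, (N <= k)%N & y = x k].
    by exists N => // k /= Nk; exists k.
  have [y [[k Nk ->] hbl]] := clp _ _ HA (nbhsx_ballx p del del0).
  exists k; split => //.
  move: hbl; rewrite -ball_normE /ball_ /= => hbl.
  have hc : forall i, (x k - p) ord0 i ^+ 2 <= del * del.
    move=> i; have := le_lt_trans (coord_norm (p - x k) i) hbl.
    rewrite !mxE => h; rewrite -(ger0_norm (sqr_ge0 _)) normrX distrC expr2.
    by apply: ler_pM => //; exact: ltW.
  apply: le_lt_trans (dotp_le_coord hc) _.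
  have d1 : del <= 1 by rewrite ge_min lexx.
  have d2 : del <= eta / (n.+1)%:R by rewrite ge_min lexx orbT.
  have d3 : del * del <= eta / (n.+1)%:R.
    by apply: le_trans d2; rewrite ger_pMr.
  apply: (@le_lt_trans _ _ (n%:R * (eta / (n.+1)%:R))).
    by apply: ler_wpM2l => //; exact: ler0n.
  rewrite mulrA ltr_pdivrMr // mulrC ltr_pM2l // ltr_nat //.
have Lip2 : forall a b, dotp (g a - g b) (g a - g b) <= Lp ^+ 2 * dotp (a - b) (a - b).
  move=> a b; rewrite -!enorm_sq -exprMn.
  have h := HL a b.
  have h2 : enorm (g a - g b) <= Lp * enorm (a - b).
    by apply: le_trans h _; apply: ler_wpM2r; [exact: enorm_ge0 | rewrite le_max lexx].
  by rewrite !expr2; apply: ler_pM => //; exact: enorm_ge0.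
have gp : g p = 0.
  apply: dotp_eq0; apply/eqP; rewrite eq_le dotp_ge0 andbT; rewrite leNgt; apply/negP => q0.
  set q := dotp (g p) (g p) in q0.
  have [N HN] := gsmall (q / 4) (divr_gt0 q0 (ltr0n _ 4)).
  have e0 : 0 < q / (4 * Lp ^+ 2) by rewrite divr_gt0 // mulr_gt0 // exprn_gt0.
  have [k [Nk Hk]] := clus _ e0 N.
  have h1 := HN k Nk.
  have h2 := Lip2 p (x k); rewrite (dotp_sqN p) in h2.
  rewrite /D in Hk.
  have h3 : Lp ^+ 2 * dotp (x k - p) (x k - p) <= q / 4.
    have E : Lp ^+ 2 * (q / (4 * Lp ^+ 2)) = q / 4.
      by field; rewrite (gt_eqF Lp0).
    rewrite -E; apply: ler_wpM2l; [by rewrite exprn_ge0 // ltW | exact: ltW].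
  have h4 := sqD (g (x k)) (g p - g (x k)).
  rewrite addrC subrK -/q in h4.
  have H0 : forall a b c e : R, a < e / 4 -> c <= e / 4 -> e <= 2 * a + 2 * b ->
     b <= c -> False by move=> a b c e; lra.
  exact: H0 h1 h3 h4 h2.
exists p; split => //.
apply/cvgrPdist_lt => e e0.
have [k0 [_ Hk0]] := clus (e ^+ 2) (exprn_gt0 2 e0) 0%N.
exists k0 => // k /= k0k.
apply: norm_lt => // i.
have h1 : D p k < e ^+ 2 := le_lt_trans (Dmono p gp k0 k k0k) Hk0.
have h2 := le_lt_trans (coord_le (x k - p) i) h1.
rewrite !mxE distrC; rewrite !mxE in h2.
rewrite ltNge; apply/negP => he.
have := ler_pM (ltW e0) (ltW e0) he he.
rewrite -expr2 -expr2 -normrX ger0_norm ?sqr_ge0 // => h3.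
by have := le_lt_trans h3 h2; rewrite expr2 ltxx.
Qed.
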